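(* Let $A\in\mathbb{R}^{n\times n}$ be symmetric with $r:=\mathrm{rank}(A)\ge 1$. Let $\epsilon\ge 0$, and let $S$ be an ordered subset of $r$ elements of $\{1,\dots,n\}$ such that $A[S]$ is a $(1+\epsilon)$-local maximizer for the absolute determinant on the set of $r\times r$ nonsingular principal submatrices of $A$. Let $H\in\mathbb{R}^{n\times n}$ be the matrix that is zero except that its submatrix with row/column indices $S$ equals $A[S]^{-1}$. Then $H$ is a symmetric reflexive generalized inverse of $A$ having at most $r^2$ nonzero entries, and $\|H\|_1\le r^2(1+\epsilon)\|H^r_{opt}\|_1$, where $H^r_{opt}$ is a symmetric reflexive generalized inverse of $A$ of minimum 1-norm.
   Context: $A[S]$ denotes the principal submatrix of $A$ with row/column indices $S$. $\|H\|_1=\sum_{i,j}|H_{ij}|$. A matrix $H$ is a generalized inverse of $A$ if $AHA=A$, and a reflexive generalized inverse if in addition $HAH=H$. For fixed $\epsilon\ge 0$ and an ordered $r$-subset $S$ of $\{1,\dots,n\}$, $A[S]$ is a $(1+\epsilon)$-local maximizer for the absolute determinant on the set of $r\times r$ nonsingular principal submatrices of $A$ if $|\det(A[S])|>0$ and $|\det(A[S])|$ cannot be increased by a factor of more than $1+\epsilon$ by swapping an element of $S$ with one element from its complement. *)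

(* Defs.v *)
From mathcomp Require Import all_boot all_order all_algebra.
Set Implicit Arguments. Unset Strict Implicit. Unset Printing Implicit Defensive.
Import Order.TTheory GRing.Theory Num.Theory.
Local Open Scope ring_scope.

Definition psub (R : Type) (n r : nat) (S : 'I_r -> 'I_n) (A : 'M[R]_n) : 'M[R]_r :=
  \matrix_(i < r, j < r) A (S i) (S j).

Definition swap_idx (n r : nat) (S : 'I_r -> 'I_n) (k : 'I_r) (j : 'I_n) : 'I_r -> 'I_n :=
  fun i => if i == k then j else S i.

Definition local_max_absdet (R : realFieldType) (n r : nat) (eps : R)
    (A : 'M[R]_n) (S : 'I_r -> 'I_n) : Prop :=
  0 < `|\det (psub S A)| /\
  forall (k : 'I_r) (j : 'I_n), j \notin codom S ->
    \det (psub (swap_idx S k j) A) != 0 ->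
    `|\det (psub (swap_idx S k j) A)| <= (1 + eps) * `|\det (psub S A)|.

Definition embed (R : nmodType) (n r : nat) (S : 'I_r -> 'I_n) (B : 'M[R]_r) : 'M[R]_n :=
  \matrix_(i < n, j < n) \sum_(k < r) \sum_(l < r) (if (S k == i) && (S l == j) then B k l else 0).

Definition is_ginv (R : pzRingType) (n : nat) (A H : 'M[R]_n) : Prop :=
  A *m H *m A = A.

Definition is_reflexive_ginv (R : pzRingType) (n : nat) (A H : 'M[R]_n) : Prop :=
  is_ginv A H /\ H *m A *m H = H.

Definition is_sym_reflexive_ginv (R : pzRingType) (n : nat) (A H : 'M[R]_n) : Prop :=
  H^T = H /\ is_reflexive_ginv A H.

Definition norm1 (R : numDomainType) (n : nat) (H : 'M[R]_n) : R :=
  \sum_(i < n) \sum_(j < n) `|H i j|.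

Definition nnz (R : nmodType) (n : nat) (H : 'M[R]_n) : nat :=
  #|[set ij : 'I_n * 'I_n | H ij.1 ij.2 != 0]|.

(* Main.v *)
Require Import Defs.
From mathcomp Require Import all_boot all_order all_algebra.
From mathcomp Require Import ring lra.
Import Order.TTheory GRing.Theory Num.Theory.
Local Open Scope ring_scope.
Set Implicit Arguments. Unset Strict Implicit.

Section S.
Variables (R : realFieldType) (n r : nat) (S : 'I_r -> 'I_n).
Definition selm : 'M[R]_(r, n) := rowsub S 1%:M.

Lemma selmE k i : selm k i = (S k == i)%:R.
Proof. by rewrite !mxE. Qed.

Lemma psubE (A : 'M[R]_n) : psub S A = selm *m A *m selm^T.
Proof.
rewrite -rowsubE -[_ *m _]trmxK trmx_mul trmxK -rowsubE.
by apply/matrixP => k l; rewrite !mxE.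
Qed.

Lemma embedE (X : 'M[R]_r) : embed S X = selm^T *m X *m selm.
Proof.
apply/matrixP => i j; rewrite !mxE exchange_big; apply: eq_bigr => l _.
rewrite !mxE big_distrl /=; apply: eq_bigr => k _.
rewrite !mxE.
by case: (S k == i); case: (S l == j); rewrite /= ?mulr1 ?mulr0 ?mul0r ?mul1r.
Qed.

Lemma factor (A : 'M[R]_n) : A^T = A -> (\rank A <= r)%N ->
  psub S A \in unitmx ->
  A = (A *m selm^T) *m invmx (psub S A) *m (A *m selm^T)^T.
Proof.
move=> sA rA uB.
have PAsub : (selm *m A <= A)%MS by apply: submxMl.
have rk : \rank (selm *m A) = \rank A.
  apply/eqP; rewrite eqn_leq mxrankS /=; last exact: PAsub.
  apply: (leq_trans rA).
  rewrite -{1}(mxrank_unit uB) psubE; exact: mxrankM_maxl.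
have : (A <= selm *m A)%MS.
  by rewrite -(geq_leqif (mxrank_leqif_sup PAsub)) rk.
move/submxP => [X eX].
have eC : A *m selm^T = X *m psub S A by rewrite psubE !mulmxA -(mulmxA X) -eX.
have eX' : X = A *m selm^T *m invmx (psub S A) by rewrite eC mulmxK.
rewrite trmx_mul sA trmxK -eX' -eX //.
Qed.

Lemma selmM (p : nat) (X : 'M[R]_(n, p)) k j : (selm *m X : 'M_(r, p)) k j = X (S k) j.
Proof. by rewrite -rowsubE mxE. Qed.

End S.

Lemma det_almost_id (R : realFieldType) r (M : 'M[R]_r) k :
  (forall m j, m != k -> M m j = (m == j)%:R) -> \det M = M k k.
Proof.
move=> HM; rewrite (expand_det_row M k) (bigD1 k) //= big1 ?addr0.
  rewrite /cofactor -signr_odd addnn odd_double expr0 mul1r.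
  have -> : row' k (col' k M) = 1%:M.
    apply/matrixP => p q; rewrite !mxE HM ?neq_lift //; have e : (lift k p == lift k q) = (p == q) by apply/eqP/eqP => [/lift_inj|->]. 
 by rewrite e.
    by rewrite eq_sym neq_lift.
  by rewrite det1 mulr1.
move=> j njk.
have njk2 : k != j by rewrite eq_sym.
have [p ep _] := unlift_some (njk2).
rewrite /cofactor (expand_det_row _ p) big1 ?mulr0 //.
move=> q _; rewrite !mxE ep HM ?(negbTE (neq_lift _ _)) ?mul0r //; by rewrite eq_sym neq_lift. 
Qed.

Lemma sum_ifeq (R : realFieldType) n (a : 'I_n) (F : 'I_n -> R) :
  \sum_i (if a == i then F i else 0) = F a.
Proof.
rewrite (bigD1 a) //= eqxx big1 ?addr0 // => i /negbTE; by rewrite eq_sym => ->.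
Qed.

Lemma sum4 (R : realFieldType) n r (F : 'I_n -> 'I_n -> 'I_r -> 'I_r -> R) :
  \sum_i \sum_j \sum_k \sum_l F i j k l = \sum_k \sum_l \sum_i \sum_j F i j k l.
Proof.
rewrite [LHS]pair_big [RHS]pair_big.
under eq_bigr do rewrite pair_big.
under [RHS]eq_bigr do rewrite pair_big.
exact: exchange_big.
Qed.

Lemma gen (R : realFieldType) (n r : nat) (A : 'M[R]_n) (eps : R)
    (S : 'I_r -> 'I_n) :
  A^T = A -> (\rank A <= r)%N -> 0 <= eps ->
  local_max_absdet eps A S ->
  let H := embed S (invmx (psub S A)) in
  [/\ is_sym_reflexive_ginv A H,
      (nnz H <= r ^ 2)%N &
      forall G : 'M[R]_n, is_ginv A G ->
        norm1 H <= (r ^ 2)%:R * (1 + eps) * norm1 G].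
Proof.
move=> sA rA eps0 [dB lm] H.
set B := psub S A.
set P := selm R S.
set Bi := invmx B.
have uB : B \in unitmx by rewrite unitmxE unitfE -normr_gt0.
have fA := factor sA rA uB.
rewrite -/P -/B -/Bi in fA.
set C := A *m P^T.
fold C in fA.
have sB : B^T = B by rewrite /B !psubE -/P !trmx_mul trmxK sA mulmxA.
have BiT : Bi^T = Bi by rewrite /Bi trmx_inv sB.
have PC : P *m C = B by rewrite /B psubE -/P mulmxA.
have PA : P *m A = C^T by rewrite /C trmx_mul trmxK sA.
have HE : H = P^T *m Bi *m P by rewrite /H embedE.
split.
- split; first by rewrite HE !trmx_mul trmxK BiT mulmxA.
  split; rewrite /is_ginv HE.
    by rewrite -!mulmxA PA (mulmxA A) mulmxA -fA.
  by rewrite -!mulmxA (mulmxA A) (mulmxA P) PC mulKmx.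
- apply: (leq_trans (subset_leq_card (_ : _ \subset setX [set x in codom S] [set x in codom S]))).
    apply/subsetP => -[i j]; rewrite !inE /=.
    apply: contraR => /nandP [ni|nj]; apply/eqP; rewrite /H /embed mxE big1 // => k _;
      rewrite big1 // => l _; case: ifP => // /andP [/eqP ek /eqP el].
      by rewrite -ek codom_f in ni.
    by rewrite -el codom_f in nj.
  rewrite cardsX cardsE -mulnn leq_mul //;
  by apply: leq_trans (card_size _) _; rewrite size_codom card_ord.
move=> G AGA.
set D := C *m Bi.
have PD : P *m D = 1%:M by rewrite /D mulmxA PC mulmxV.
have DS : forall m k, D (S m) k = (m == k)%:R.
  by move=> m k; rewrite -(selmM S) -/P PD mxE.
have BCGC : B = C^T *m G *m C.
  have e : P *m (A *m G *m A) *m P^T = C^T *m G *m C by rewrite -PA !mulmxA.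
  by rewrite AGA -psubE in e.
have BiE : Bi = D^T *m G *m D.
  have e : D^T *m G *m D = Bi *m (C^T *m G *m C) *m Bi.
    by rewrite /D trmx_mul BiT !mulmxA.
  by rewrite -BCGC mulVmx // mul1mx in e.
have CBC : C *m Bi *m C^T = D *m B *m D^T.
  by rewrite /D [(C *m Bi)^T]trmx_mul BiT -!mulmxA mulKmx.
have Dsq : forall i k, D i k ^+ 2 <= 1 + eps.
  move=> i k; case: (boolP (i \in codom S)) => [/codomP [m ->] | ni].
    rewrite DS; case: (m == k); rewrite /= ?expr1n ?expr0n /=; lra.
  set T := swap_idx S k i.
  set M := selm R T *m D.
  have detM : \det M = D i k.
    rewrite (@det_almost_id _ _ M k).
      by rewrite /M selmM /T /swap_idx eqxx.
    move=> m j nmk; rewrite /M selmM /T /swap_idx (negbTE nmk) DS.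
    by [].
  have detT : \det (psub T A) = D i k ^+ 2 * \det B.
    have -> : psub T A = M *m B *m M^T.
      by rewrite psubE {1}fA CBC /M !trmx_mul !mulmxA.
    by rewrite !det_mulmx det_tr detM expr2; ring.
  have [D0|Dn0] := eqVneq (D i k) 0.
    rewrite D0 expr0n /=; lra.
  have := lm k i ni; rewrite -/T detT mulf_neq0 ?expf_neq0 //; last first.
    by rewrite -normr_gt0.
  move/(_ isT); rewrite normrM ger0_norm ?sqr_ge0 // ler_pM2r //.
have KB : forall i j k l, `|D i k| * `|D j l| <= 1 + eps.
  move=> i j k l; have h1 := Dsq i k; have h2 := Dsq j l.
  rewrite -(real_normK (num_real (D i k))) in h1.
  rewrite -(real_normK (num_real (D j l))) in h2.
  have := normr_ge0 (D i k); have := normr_ge0 (D j l); nra.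
have entry : forall k l, `|Bi k l| <= (1 + eps) * norm1 G.
  move=> k l; rewrite BiE mxE /norm1 exchange_big mulr_sumr.
  apply: (le_trans (ler_norm_sum _ _ _)); apply: ler_sum => j _.
  rewrite mxE big_distrl mulr_sumr.
  apply: (le_trans (ler_norm_sum _ _ _)); apply: ler_sum => i _.
  rewrite mxE !normrM mulrAC; apply: ler_wpM2r => //; exact: KB.
have hH : forall i j, `|H i j| <= \sum_k \sum_l
    (if (S k == i) && (S l == j) then `|Bi k l| else 0).
  move=> i j; rewrite /H /embed mxE.
  apply: (le_trans (ler_norm_sum _ _ _)); apply: ler_sum => k _.
  apply: (le_trans (ler_norm_sum _ _ _)); apply: ler_sum => l _.
  by case: ifP => _; rewrite ?normr0.
have inner : forall k l, \sum_i \sum_j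
    (if (S k == i) && (S l == j) then `|Bi k l| else 0) = `|Bi k l|.
  move=> k l.
  rewrite -[RHS](sum_ifeq (S k) (fun _ => `|Bi k l|)).
  apply: eq_bigr => i _; case: (S k == i) => /=.
    exact: (sum_ifeq (S l) (fun _ => `|Bi k l|)).
  by rewrite big1.
apply: (le_trans (y := \sum_k \sum_l `|Bi k l|)).
  apply: (le_trans (y := \sum_(i < n) \sum_(j < n) \sum_k \sum_l
    (if (S k == i) && (S l == j) then `|Bi k l| else 0))).
    by apply: ler_sum => i _; apply: ler_sum => j _; exact: hH.
  by rewrite sum4; apply: ler_sum => k _; apply: ler_sum => l _; rewrite inner.
apply: (le_trans (y := \sum_(k < r) \sum_(l < r) ((1 + eps) * norm1 G))).
  by apply: ler_sum => k _; apply: ler_sum => l _; exact: entry.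
by rewrite !sumr_const !card_ord -mulrnA mulnn -mulrA mulr_natl.
Qed.

Theorem theorem2p6 (R : realFieldType) (n : nat) (A : 'M[R]_n) (eps : R)
    (S : 'I_(\rank A) -> 'I_n) :
  A^T = A -> (1 <= \rank A)%N -> 0 <= eps -> injective S ->
  local_max_absdet eps A S ->
  let H := embed S (invmx (psub S A)) in
  [/\ is_sym_reflexive_ginv A H,
      (nnz H <= \rank A ^ 2)%N &
      forall Hopt : 'M[R]_n,
        is_sym_reflexive_ginv A Hopt ->
        (forall G : 'M[R]_n, is_sym_reflexive_ginv A G -> norm1 Hopt <= norm1 G) ->
        norm1 H <= ((\rank A) ^ 2)%:R * (1 + eps) * norm1 Hopt].
Proof.
move=> sA _ eps0 _ lm H.
have [h1 h2 h3] := @gen R n (\rank A) A eps S sA (leqnn _) eps0 lm.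
split => // Hopt [_ [g _]] _; exact: h3.
Qed.
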